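(* Let $\frac{1}{2}< \alpha <1$ and let $G$ be a graph with $n$ vertices and $m$ edges having no isolated vertices. If $1\leq k\leq n-1$, then $$S_{k}(A_{\alpha}(G))\leq 2\alpha m-(n-k)\left(\frac{\det(A_{\alpha}(G))}{\lambda_1(A_{\alpha}(G))\,\lambda_2^{k-1}(A_{\alpha}(G))}\right)^{\frac{1}{n-k}},$$ with equality if and only if $\lambda_2(A_{\alpha}(G))=\cdots=\lambda_k(A_{\alpha}(G))$ and $\lambda_{k+1}(A_{\alpha}(G))=\cdots=\lambda_n(A_{\alpha}(G))$.
   Context: All graphs are simple and undirected. $A_{\alpha}(G)=\alpha D(G)+(1-\alpha)A(G)$, where $A(G)$ is the adjacency matrix and $D(G)$ the diagonal matrix of vertex degrees. $\lambda_1(M)\geq\cdots\geq\lambda_n(M)$ denote the eigenvalues of a real symmetric matrix $M$, and $S_k(M)=\sum_{i=1}^k\lambda_i(M)$. *)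

(* Defs.v *)
From HB Require Import structures.
From mathcomp Require Import all_boot all_order all_algebra.
From mathcomp Require Import reals exp.
Set Implicit Arguments. Unset Strict Implicit. Unset Printing Implicit Defensive.
Import Order.TTheory GRing.Theory Num.Theory.
Local Open Scope ring_scope.

Definition simple_graph (n : nat) (e : rel 'I_n) : Prop :=
  (forall i j, e i j = e j i) /\ (forall i, ~~ e i i).

Definition no_isolated (n : nat) (e : rel 'I_n) : Prop :=
  forall i, exists j, e i j.

Definition nedges (n : nat) (e : rel 'I_n) : nat :=
  #|[set p : 'I_n * 'I_n | e p.1 p.2 && (p.1 < p.2)%N]|.

Definition deg (n : nat) (e : rel 'I_n) (i : 'I_n) : nat := #|[set j | e i j]|.

Definition adjmx (R : realType) (n : nat) (e : rel 'I_n) : 'M[R]_n :=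
  \matrix_(i, j) (e i j)%:R.

Definition degmx (R : realType) (n : nat) (e : rel 'I_n) : 'M[R]_n :=
  \matrix_(i, j) ((i == j)%:R * (deg e i)%:R).

Definition Aalpha (R : realType) (n : nat) (e : rel 'I_n) (alpha : R) : 'M[R]_n :=
  alpha *: degmx R e + (1 - alpha) *: adjmx R e.

(* lam 1 >= ... >= lam n are the eigenvalues (with multiplicity) of M:
   non-increasing and the characteristic polynomial splits with these roots. *)
Definition sorted_eigenvalues (R : realType) (n : nat) (M : 'M[R]_n)
    (lam : nat -> R) : Prop :=
  (forall i j, (1 <= i)%N -> (i <= j)%N -> (j <= n)%N -> lam j <= lam i) /\
  char_poly M = \prod_(1 <= i < n.+1) ('X - (lam i)%:P).

Definition Sk (R : realType) (lam : nat -> R) (k : nat) : R :=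
  \sum_(1 <= i < k.+1) lam i.

(* Main.v *)
Require Import Defs.
From HB Require Import structures.
From mathcomp Require Import all_boot all_order all_algebra.
From mathcomp Require Import reals exp.
From mathcomp Require Import ring lra zify.
Set Implicit Arguments. Unset Strict Implicit. Unset Printing Implicit Defensive.
Import Order.TTheory GRing.Theory Num.Theory.
Local Open Scope ring_scope.
Lemma sum_deg_nat n (e : rel 'I_n) : simple_graph e ->
  (\sum_i deg e i = 2 * nedges e)%N.
Proof.
move=> [esym eirr].
have hd i : deg e i = (\sum_j e i j)%N.
  by rewrite /deg -sum1_card big_mkcond /=; apply: eq_bigr => j _; rewrite inE; case: (e i j).
rewrite (eq_bigr _ (fun i _ => hd i)) pair_big /=.
have ne : nedges e = (\sum_(p : 'I_n * 'I_n) (e p.1 p.2 && (p.1 < p.2)%N))%N.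
  by rewrite /nedges -sum1_card big_mkcond /=; apply: eq_bigr => p _; rewrite inE; case: (_ && _).
have split : (\sum_(p : 'I_n * 'I_n) e p.1 p.2 = \sum_(p : 'I_n * 'I_n) (e p.1 p.2 && (p.1 < p.2)%N)
   + \sum_(p : 'I_n * 'I_n) (e p.1 p.2 && (p.2 < p.1)%N))%N.
  rewrite -big_split /=; apply: eq_bigr => [[i j]] _ /=.
  case: (ltngtP i j) => [h|h|h]; rewrite ?andbT ?andbF ?addn0 ?add0n //=.
  have -> : i = j by apply: val_inj.
  by rewrite (negbTE (eirr j)).
have sw : (\sum_(p : 'I_n * 'I_n) (e p.1 p.2 && (p.2 < p.1)%N) = \sum_(p : 'I_n * 'I_n) (e p.1 p.2 && (p.1 < p.2)%N))%N.
  rewrite (reindex_inj (h := fun p : 'I_n * 'I_n => (p.2, p.1))) /=; last by move=> [a b] [c d] [-> ->].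
  by apply: eq_bigr => [[i j]] _ /=; rewrite esym.
by rewrite split sw ne mul2n addnn.
Qed.

Lemma tr_Aalpha (R : realType) n (e : rel 'I_n) (alpha : R) : simple_graph e ->
  \tr (Aalpha e alpha) = 2 * alpha * (nedges e)%:R.
Proof.
move=> G; have [_ eirr] := G.
have -> : \tr (Aalpha e alpha) = \sum_i alpha * (deg e i)%:R.
  rewrite /mxtrace; apply: eq_bigr => i _; rewrite !mxE eqxx (negbTE (eirr i)) /=; ring.
by rewrite -mulr_sumr -natr_sum sum_deg_nat // natrM; ring.
Qed.

Lemma deg_sum (R : realType) n (e : rel 'I_n) i :
  \sum_j (e i j)%:R = (deg e i)%:R :> R.
Proof.
rewrite /deg -sum1_card natr_sum [RHS]big_mkcond /=; apply: eq_bigr => j _; rewrite inE; by case: (e i j).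
Qed.

Lemma eig_pos (R : realType) n (e : rel 'I_n) (alpha : R) a :
  simple_graph e -> no_isolated e -> 1 / 2 < alpha -> alpha < 1 ->
  root (char_poly (Aalpha e alpha)) a -> 0 < a.
Proof.
move=> [esym eirr] noi ha1 ha2.
rewrite -eigenvalue_root_char => /eigenvalueP [v hv vn0].
set A := Aalpha e alpha in hv.
pose N := \sum_j v 0 j ^+ 2.
pose D := \sum_i (deg e i)%:R * v 0 i ^+ 2.
pose S := \sum_i \sum_j (e i j)%:R * (v 0 i * v 0 j).
have hq : \sum_j (v *m A) 0 j * v 0 j = a * N.
  by rewrite hv /N mulr_sumr; apply: eq_bigr => j _; rewrite mxE expr2 mulrA.
have hq2 : \sum_j (v *m A) 0 j * v 0 j = alpha * D + (1 - alpha) * S.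
  have -> : \sum_j (v *m A) 0 j * v 0 j = \sum_j \sum_i v 0 i * A i j * v 0 j.
    by apply: eq_bigr => j _; rewrite mxE mulr_suml.
  rewrite exchange_big /= /D /S mulr_sumr mulr_sumr -big_split /=.
  apply: eq_bigr => i _.
  rewrite (bigD1 i) //= (bigD1 i (P := predT)) //= mulrDr addrA.
  rewrite /A /Aalpha !mxE eqxx (negbTE (eirr i)) /=.
  congr (_ + _); first ring.
  rewrite mulr_sumr; apply: eq_bigr => j /negbTE hij.
  rewrite !mxE (eq_sym i j) hij /=; ring.
have hDS : 0 <= 2 * D + 2 * S.
  have -> : 2 * D + 2 * S = \sum_i \sum_j (e i j)%:R * (v 0 i + v 0 j) ^+ 2.
    have h1 : \sum_i \sum_j (e i j)%:R * v 0 j ^+ 2 = D.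
      rewrite exchange_big /D; apply: eq_bigr => j _.
      rewrite -deg_sum mulr_suml; apply: eq_bigr => i _; by rewrite esym.
    have h2 : \sum_i \sum_j (e i j)%:R * v 0 i ^+ 2 = D.
      rewrite /D; apply: eq_bigr => i _; by rewrite -deg_sum mulr_suml.
    rewrite (_ : 2 * D = D + D); last by ring. rewrite -{1}h1 -h2 /S. rewrite mulr_sumr -!big_split /=; apply: eq_bigr => i _.
    rewrite mulr_sumr -!big_split /=; apply: eq_bigr => j _; ring.
  apply: sumr_ge0 => i _; apply: sumr_ge0 => j _; apply: mulr_ge0 => //; exact: sqr_ge0.
have Dpos : 0 < D.
  have [i hi] : exists i, v 0 i != 0.
    apply/existsP; move: vn0; apply: contraR; rewrite negb_exists => /forallP h.
    by apply/eqP/matrixP => r j; rewrite (ord1 r) mxE; apply/eqP; have := h j; rewrite negbK.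
  rewrite /D (bigD1 i) //=; apply: ltr_pwDl; last first.
    by apply: sumr_ge0 => j _; apply: mulr_ge0 => //; exact: sqr_ge0.
  apply: mulr_gt0; last by rewrite exprn_even_gt0.
  have [j hj] := noi i; rewrite ltr0n /deg card_gt0; apply/set0Pn; exists j; by rewrite inE.
have Npos : 0 <= N by apply: sumr_ge0 => j _; exact: sqr_ge0.
have aN : 0 < a * N.
  rewrite -hq hq2.
  have h1 : 0 <= (1 - alpha) * (2 * D + 2 * S) by apply: mulr_ge0 => //; lra.
  have h2 : 0 < (2 * alpha - 1) * D by apply: mulr_gt0 => //; lra.
  lra.
have Np : 0 < N.
  rewrite lt_neqAle Npos andbT; apply/negP => /eqP N0; move: aN; by rewrite -N0 mulr0 ltxx.
by move: aN; rewrite pmulr_lgt0.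
Qed.

Lemma cp_facts (R : realType) n (M : 'M[R]_n) lam : sorted_eigenvalues M lam ->
  [/\ (0 < n)%N -> \sum_(1 <= i < n.+1) lam i = \tr M,
      \prod_(1 <= i < n.+1) lam i = \det M &
      forall i, (1 <= i <= n)%N -> root (char_poly M) (lam i)].
Proof.
move=> [_ hcp].
have hP : char_poly M = \prod_(p <- map lam (iota 1 n)) ('X - p%:P).
  by rewrite hcp big_map /index_iota subn1.
have hs : size (map lam (iota 1 n)) = n by rewrite size_map size_iota.
split.
- move=> n0; apply: oppr_inj; rewrite -char_poly_trace // hP -{3}hs coefPn_prod_XsubC ?hs -?lt0n //.
  by rewrite big_map /index_iota subn1.
- have -> : \prod_(1 <= i < n.+1) lam i = \prod_(p <- map lam (iota 1 n)) p.
    by rewrite big_map /index_iota subn1.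
  apply: (@mulfI _ ((-1) ^+ n)); first by rewrite signr_eq0.
  by rewrite -char_poly_det hP coef0_prod_XsubC hs.
- move=> i hi; rewrite hP root_prod_XsubC; apply: map_f; rewrite mem_iota; lia.
Qed.
Lemma powR_root (R : realType) (x : R) m : 0 <= x -> (0 < m)%N -> (x ^+ m) `^ (m%:R^-1) = x.
Proof.
move=> x0 m0; rewrite -powR_mulrn // -powRrM mulfV ?powRr1 //.
by rewrite pnatr_eq0 -lt0n.
Qed.

Lemma prod_eq_const (R : realFieldType) (r : seq nat) (F : nat -> R) c :
  (forall i, i \in r -> 0 < F i <= c) -> \prod_(i <- r) F i = c ^+ size r ->
  forall i, i \in r -> F i = c.
Proof.
elim: r => [//|x r IH] hF.
rewrite big_cons /= exprS => hp.
have [hx0 hxc] : 0 < F x /\ F x <= c by apply/andP; apply: hF; rewrite inE eqxx.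
have hr : forall i, i \in r -> 0 < F i <= c by move=> i hi; apply: hF; rewrite inE hi orbT.
have c0 : 0 < c by apply: lt_le_trans hxc.
have P0 : 0 < \prod_(i <- r) F i.
  rewrite big_seq; apply: prodr_gt0 => i hi; by have /andP[] := hr i hi.
have Pc : \prod_(i <- r) F i <= c ^+ size r.
  have <- : \prod_(i <- r) c = c ^+ size r.
    by rewrite big_const_seq count_predT; elim: (size r) => [|s /= ->]; rewrite ?expr0 ?exprS.
  rewrite big_seq [in X in _ <= X]big_seq; apply: ler_prod => i hi; have /andP[h1 h2] := hr i hi.
  by rewrite ltW.
have Fxc : F x = c.
  apply/eqP; rewrite eq_le hxc /=; rewrite leNgt; apply/negP => hlt.
  have : F x * \prod_(i <- r) F i < c * c ^+ size r.
    apply: (le_lt_trans (y := F x * c ^+ size r)); first by rewrite ler_pM2l.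
    by rewrite ltr_pM2r // exprn_gt0.
  by rewrite hp ltxx.
have Pe : \prod_(i <- r) F i = c ^+ size r.
  by apply: (mulfI (x := c)); [rewrite gt_eqF | rewrite -hp Fxc].
move=> i; rewrite inE => /orP[/eqP -> //|hi]; exact: IH hr Pe i hi.
Qed.

Lemma key (R : realType) (n k : nat) (lam : nat -> R) (tr : R) :
  (forall i, (1 <= i <= n)%N -> 0 < lam i) ->
  (forall i j, (1 <= i)%N -> (i <= j)%N -> (j <= n)%N -> lam j <= lam i) ->
  (1 <= k)%N -> (k <= n - 1)%N ->
  \sum_(1 <= i < n.+1) lam i = tr ->
  (Sk lam k <= tr - (n - k)%:R * powR (\prod_(1 <= i < n.+1) lam i / (lam 1%N * lam 2%N ^+ (k - 1)))
                         ((n - k)%:R^-1))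
  /\
  (Sk lam k = tr - (n - k)%:R * powR (\prod_(1 <= i < n.+1) lam i / (lam 1%N * lam 2%N ^+ (k - 1)))
                         ((n - k)%:R^-1)
   <->
   (forall i, (2 <= i <= k)%N -> lam i = lam 2%N) /\
   (forall i, (k.+1 <= i <= n)%N -> lam i = lam k.+1)).
Proof.
move=> pos srt k1 kn htr.
set m := (n - k)%N.
have m0 : (0 < m)%N by rewrite /m; lia.
set T := \sum_(k.+1 <= i < n.+1) lam i.
have hS : Sk lam k + T = tr.
  by rewrite -htr /Sk /T -big_cat_nat //; lia.
set P := \prod_(k.+1 <= i < n.+1) lam i.
set P' := \prod_(2 <= i < k.+1) lam i.
have hdet : \prod_(1 <= i < n.+1) lam i = lam 1%N * P' * P.
  rewrite (big_cat_nat _ (n := k.+1)) //; last by lia.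
  by rewrite big_ltn.
pose E := fun j : 'I_m => lam (k.+1 + j)%N.
have hT : T = \sum_(j in 'I_m) E j.
  rewrite /T -{1}(add0n k.+1) big_addn subSS big_mkord; apply: eq_bigr => j _; by rewrite /E addnC.
have hP : P = \prod_(j in 'I_m) E j.
  rewrite /P -{1}(add0n k.+1) big_addn subSS big_mkord; apply: eq_bigr => j _; by rewrite /E addnC.
have Epos : forall j, 0 < E j by move=> j; apply: pos; have := ltn_ord j; rewrite /m; lia.
have l1pos : 0 < lam 1%N by apply: pos; lia.
have l2pos : 0 < lam 2%N by apply: pos; lia.
have P'pos : 0 < P' by rewrite /P' big_nat; apply: prodr_gt0 => i hi; apply: pos; lia.
have Ppos : 0 < P by rewrite hP; apply: prodr_gt0 => i _.
have Tpos : 0 < T.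
  rewrite hT (bigD1 (Ordinal m0)) //=.
  have := Epos (Ordinal m0).
  have : 0 <= \sum_(i in 'I_m | i != Ordinal m0) E i by apply: sumr_ge0 => j _; exact: ltW.
  lra.
have P'le : P' <= lam 2%N ^+ (k - 1).
  have -> : (k - 1 = k.+1 - 2)%N by lia.
  rewrite -prodr_const_nat /P' big_nat [X in _ <= X]big_nat; apply: ler_prod => i hi.
  apply/andP; split; first (apply: ltW; apply: pos; lia). apply: srt; lia.
set rho := P' / lam 2%N ^+ (k - 1).
have l2k : 0 < lam 2%N ^+ (k - 1) by rewrite exprn_gt0.
have hQ : \prod_(1 <= i < n.+1) lam i / (lam 1%N * lam 2%N ^+ (k - 1)) = P * rho.
  rewrite hdet /rho invfM; field; apply/andP; split; rewrite gt_eqF //.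
rewrite hQ.
have rho1 : rho <= 1 by rewrite /rho ler_pdivrMr // mul1r.
have rho0 : 0 < rho by rewrite /rho divr_gt0.
have QleP : P * rho <= P by rewrite -{2}(mulr1 P) ler_pM2l.
have Q0 : 0 < P * rho by rewrite mulr_gt0.
set r := (m%:R^-1 : R).
have r0 : 0 < r by rewrite /r invr_gt0 ltr0n.
set mu := T / m%:R.
have mu0 : 0 < mu by rewrite /mu divr_gt0 // ltr0n.
have hTmu : T = m%:R * mu by rewrite /mu mulrC divfK // pnatr_eq0 -lt0n.
have agm := @leif_AGM R 'I_m predT E.
rewrite /= card_ord -hT -hP -/mu in agm.
have agm' := agm (fun i _ => ltW (Epos i)).
have PQr : (P * rho) `^ r <= P `^ r.
  by apply: (ge0_ler_powR (ltW r0)) => //; rewrite nnegrE ltW.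
have Pmu : P `^ r <= mu.
  rewrite -{1}(powR_root (ltW mu0) m0); apply: (ge0_ler_powR (ltW r0)).
  - by rewrite nnegrE ltW.
  - by rewrite nnegrE exprn_ge0 // ltW.
  - exact: agm'.1.
have mr : (0 : R) < m%:R by rewrite ltr0n.
split.
  have : m%:R * (P * rho) `^ r <= m%:R * mu.
    by rewrite ler_pM2l //; apply: le_trans Pmu.
  lra.
split.
- move=> heq.
  have eq1 : (P * rho) `^ r = mu.
    have : m%:R * (P * rho) `^ r = m%:R * mu by lra.
    by move/mulfI; apply; rewrite gt_eqF.
  have e1 : (P * rho) `^ r = P `^ r by apply/eqP; rewrite eq_le PQr /= eq1.
  have e2 : P `^ r = mu by apply/eqP; rewrite eq_le Pmu /= -eq1 PQr.
  split.
  + have hPQ : P * rho = P.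
      by apply: (powR_injective r0); rewrite ?nnegrE ?ltW.
    have hrho : rho = 1 by apply: (mulfI (x := P)); [rewrite gt_eqF | rewrite mulr1].
    have hP' : P' = lam 2%N ^+ (k - 1).
      by move: hrho; rewrite /rho => /(congr1 (fun t => t * lam 2%N ^+ (k - 1))) /=; rewrite mul1r divfK ?gt_eqF.
    move=> i hi.
    apply: (@prod_eq_const R (index_iota 2 k.+1) lam (lam 2%N)).
    * move=> j; rewrite mem_index_iota => hj; apply/andP; split; [apply: pos | apply: srt]; move: hi hj k1 kn; clear; lia.
    * by rewrite -/(P') hP' size_iota subSS subn1.
    * rewrite mem_index_iota; move: hi; clear; lia.
  + have hPm : P = mu ^+ m.
      apply: (powR_injective r0); rewrite ?nnegrE ?ltW ?exprn_gt0 //.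
      by rewrite powR_root // ltW.
    have := agm'.2; rewrite hPm eqxx => /esym /forallP hall.
    move=> i hi.
    have hi' : (i - k.+1 < m)%N by rewrite /m; move: hi; clear; lia.
    have := hall (Ordinal hi'); move/forallP => /(_ (Ordinal m0)) /eqP.
    rewrite /E /= => h.
    have ei1 : (k.+1 + (i - k.+1) = i)%N by move: hi; clear; lia.
    by rewrite -{1}ei1 h addn0.
- move=> [h1 h2].
  have hP' : P' = lam 2%N ^+ (k - 1).
    have -> : (k - 1 = k.+1 - 2)%N by clear; lia.
    rewrite -prodr_const_nat /P' big_nat [X in _ = X]big_nat; apply: eq_bigr => i hi.
    apply: h1; move: hi; clear; lia.
  have hrho : rho = 1 by rewrite /rho hP' divff // gt_eqF.
  have hPm : P = mu ^+ m.
    apply/eqP; rewrite agm'.2; apply/forallP => i; apply/forallP => j.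
    rewrite /E (h2 (k.+1 + i)%N) ?(h2 (k.+1 + j)%N) //.
    + by rewrite eqxx implybT.
    + have := ltn_ord j; rewrite /m; move: kn; clear; lia.
    + have := ltn_ord i; rewrite /m; move: kn; clear; lia.
  rewrite hrho mulr1 hPm powR_root ?ltW // hTmu in hS *.
  lra.
Qed.

Unset Implicit Arguments.

Theorem theorem3p3 (R : realType) (n : nat) (e : rel 'I_n) (alpha : R)
    (lam : nat -> R) (k : nat) :
  simple_graph e -> no_isolated e ->
  1 / 2 < alpha -> alpha < 1 ->
  sorted_eigenvalues (Aalpha e alpha) lam ->
  (1 <= k)%N -> (k <= n - 1)%N ->
  (Sk lam k <= 2 * alpha * (nedges e)%:R
     - (n - k)%:R * powR (\det (Aalpha e alpha) / (lam 1%N * lam 2%N ^+ (k - 1)))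
                         ((n - k)%:R^-1))
  /\
  (Sk lam k = 2 * alpha * (nedges e)%:R
     - (n - k)%:R * powR (\det (Aalpha e alpha) / (lam 1%N * lam 2%N ^+ (k - 1)))
                         ((n - k)%:R^-1)
   <->
   (forall i, (2 <= i <= k)%N -> lam i = lam 2%N) /\
   (forall i, (k.+1 <= i <= n)%N -> lam i = lam k.+1)).
Proof.
move=> G noi ha1 ha2 se k1 kn.
have [htr hdet hroot] := cp_facts se.
have n0 : (0 < n)%N by move: k1 kn; clear; lia.
have pos : forall i, (1 <= i <= n)%N -> 0 < lam i.
  by move=> i hi; apply: (eig_pos G noi ha1 ha2 (hroot i hi)).
rewrite -hdet -tr_Aalpha //.
apply: key => //; first exact: se.1.
by rewrite htr.
Qed.
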